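(* Let $f$ be a $2\pi$-periodic continuous function with modulus of continuity $\omega(t)$, and let $A=(a_{n,k})$ be a lower triangular infinite matrix of real numbers ($a_{n,k}=0$ for $k>n$) with $a_{n,k}\ge 0$ and $\sum_{k=0}^n a_{n,k}=1$ for all $n$. Let $\beta\ge0$ and suppose \[ \sum_{k=m}^{\infty}(k+1)^{\beta}\left|\frac{a_{n,k}}{(k+1)^{\beta}}-\frac{a_{n,k+1}}{(k+2)^{\beta}}\right|=\mathcal{O}(a_{n,m}) \] for all $m=0,1,\dots,n$ and $n=0,1,\dots$. Then \[ \|T_{n,A}(f)-f\|=\mathcal{O}\left(\omega\left(\frac{\pi}{n+1}\right)+\sum_{v=1}^{n}v^{-1}\omega\left(\frac{\pi}{v}\right)\sum_{j=0}^{v}a_{n,j}\right). \]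
   Context: $S_k(f;x)$ is the $k$-th partial sum of the Fourier series of $f$ at $x$, and $T_{n,A}(f;x):=\sum_{k=0}^n a_{n,k}S_k(f;x)$. $\|\cdot\|$ is the sup-norm. $\omega(\delta)=\sup_{|h|\le\delta}\sup_x|f(x+h)-f(x)|$. The notation $u=\mathcal{O}(v)$ means $u\le Cv$ for a positive constant $C$ (independent of $n$). *)

(* Defs.v *)
From Stdlib Require Import Reals List.
From Coquelicot Require Import Coquelicot.
Open Scope R_scope.

(* sum_{k=m}^{n} g k ; equals 0 when n < m *)
Definition sumR (m n : nat) (g : nat -> R) : R :=
  fold_right Rplus 0 (map g (seq m (S n - m))).

Definition fourier_a (f : R -> R) (k : nat) : R :=
  / PI * RInt (fun t => f t * cos (INR k * t)) (- PI) PI.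
Definition fourier_b (f : R -> R) (k : nat) : R :=
  / PI * RInt (fun t => f t * sin (INR k * t)) (- PI) PI.

Definition S_partial (f : R -> R) (k : nat) (x : R) : R :=
  fourier_a f 0 / 2 +
  sumR 1 k (fun j => fourier_a f j * cos (INR j * x) + fourier_b f j * sin (INR j * x)).

Definition T_nA (a : nat -> nat -> R) (f : R -> R) (n : nat) (x : R) : R :=
  sumR 0 n (fun k => a n k * S_partial f k x).

Definition modulus (f : R -> R) (d : R) : R :=
  real (Lub_Rbar (fun y => exists h x, Rabs h <= d /\ y = Rabs (f (x + h) - f x))).

(* Main.v *)
Require Import Defs.
From Stdlib Require Import Reals List Lra Lia.
From Coquelicot Require Import Coquelicot.
Open Scope R_scope.

Definition frs (l : list nat) (g : nat -> R) := fold_right Rplus 0 (map g l).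

Lemma sumR_frs m n g : sumR m n g = frs (seq m (S n - m)) g.
Proof. reflexivity. Qed.

Lemma frs_plus l f g : frs l (fun k => f k + g k) = frs l f + frs l g.
Proof. induction l; unfold frs in *; simpl; [ring|]. rewrite IHl; ring. Qed.
Lemma frs_scal l c g : frs l (fun k => c * g k) = c * frs l g.
Proof. induction l; unfold frs in *; simpl; [ring|]. rewrite IHl; ring. Qed.
Lemma frs_minus l f g : frs l (fun k => f k - g k) = frs l f - frs l g.
Proof. induction l; unfold frs in *; simpl; [ring|]. rewrite IHl; ring. Qed.
Lemma frs_ext l f g : (forall k, In k l -> f k = g k) -> frs l f = frs l g.
Proof. induction l; unfold frs in *; simpl; intros; [ring|]. rewrite H, IHl; auto. Qed.
Lemma frs_le l f g : (forall k, In k l -> f k <= g k) -> frs l f <= frs l g.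
Proof. induction l; unfold frs in *; simpl; intros; [lra|].
  apply Rplus_le_compat; auto. Qed.
Lemma frs_abs l f : Rabs (frs l f) <= frs l (fun k => Rabs (f k)).
Proof. induction l; unfold frs in *; simpl; [rewrite Rabs_R0; lra|].
  eapply Rle_trans; [apply Rabs_triang|]. lra. Qed.
Lemma frs_nonneg l f : (forall k, In k l -> 0 <= f k) -> 0 <= frs l f.
Proof. induction l; unfold frs in *; simpl; intros; [lra|].
  apply Rplus_le_le_0_compat; auto. Qed.

Lemma sumR_plus m n f g : sumR m n (fun k => f k + g k) = sumR m n f + sumR m n g.
Proof. apply frs_plus. Qed.
Lemma sumR_scal m n c g : sumR m n (fun k => c * g k) = c * sumR m n g.
Proof. apply frs_scal. Qed.
Lemma sumR_minus m n f g : sumR m n (fun k => f k - g k) = sumR m n f - sumR m n g.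
Proof. apply frs_minus. Qed.
Lemma sumR_ext m n f g : (forall k, (m <= k <= n)%nat -> f k = g k) -> sumR m n f = sumR m n g.
Proof. intros; apply frs_ext. intros k Hk; apply in_seq in Hk; apply H; lia. Qed.
Lemma sumR_le m n f g : (forall k, (m <= k <= n)%nat -> f k <= g k) -> sumR m n f <= sumR m n g.
Proof. intros; apply frs_le. intros k Hk; apply in_seq in Hk; apply H; lia. Qed.
Lemma sumR_abs m n f : Rabs (sumR m n f) <= sumR m n (fun k => Rabs (f k)).
Proof. apply frs_abs. Qed.
Lemma sumR_nonneg m n f : (forall k, (m <= k <= n)%nat -> 0 <= f k) -> 0 <= sumR m n f.
Proof. intros; apply frs_nonneg. intros k Hk; apply in_seq in Hk; apply H; lia. Qed.

Lemma sumR_nil m n g : (n < m)%nat -> sumR m n g = 0.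
Proof. intros; unfold sumR. replace (S n - m)%nat with 0%nat by lia. reflexivity. Qed.

Lemma sumR_S m n g : (m <= S n)%nat -> sumR m (S n) g = sumR m n g + g (S n).
Proof. intros; unfold sumR. replace (S (S n) - m)%nat with (S (S n - m)) by lia.
  rewrite seq_S, map_app, fold_right_app. cbn [fold_right map].
  replace (m + (S n - m))%nat with (S n) by lia.
  generalize (map g (seq m (S n - m))). intro l. induction l; simpl; [ring|]. rewrite IHl; ring. Qed.

Lemma sumR_first m n g : (m <= n)%nat -> sumR m n g = g m + sumR (S m) n g.
Proof. intros; unfold sumR. replace (S n - m)%nat with (S (S n - S m)) by lia. reflexivity. Qed.

Lemma sumR_one m g : sumR m m g = g m.
Proof. unfold sumR. replace (S m - m)%nat with 1%nat by lia. simpl. ring. Qed.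

Lemma frs_const_aux d p c : fold_right Rplus 0 (map (fun _ : nat => c) (seq p d)) = INR d * c.
Proof. revert p. induction d; intros p; cbn [seq map fold_right]; [simpl; ring|].
  rewrite IHd. rewrite S_INR. ring. Qed.
Lemma sumR_const m n c : sumR m n (fun _ => c) = INR (S n - m) * c.
Proof. apply frs_const_aux. Qed.

Lemma sumR_split m p n g : (m <= p)%nat -> (p <= n)%nat ->
  sumR m n g = sumR m p g + sumR (S p) n g.
Proof. intros Hmp Hpn. induction Hpn.
  - rewrite (sumR_nil (S p)); [ring|lia].
  - rewrite sumR_S by lia. rewrite IHHpn. rewrite (sumR_S (S p)) by lia. ring. Qed.

Lemma sumR_shift m d g : sumR 0 d (fun i => g (m + i)%nat) = sumR m (m + d) g.
Proof. induction d.
  - rewrite !Nat.add_0_r, !sumR_one. rewrite Nat.add_0_r; auto.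
  - rewrite sumR_S by lia. rewrite IHd. replace (m + S d)%nat with (S (m + d)) by lia.
    rewrite sumR_S by lia. auto. Qed.

Lemma sumR_mono m p q g : (forall k, 0 <= g k) -> (p <= q)%nat -> sumR m p g <= sumR m q g.
Proof. intros Hg H. induction H; [lra|].
  destruct (Compare_dec.le_lt_dec m (S m0)).
  - rewrite sumR_S by auto. specialize (Hg (S m0)); lra.
  - rewrite (sumR_nil m (S m0)) by lia. rewrite (sumR_nil m m0) in IHle by lia. lra. Qed.

Lemma isR_plus (f g : R -> R) a b (If Ig : R) : is_RInt f a b If -> is_RInt g a b Ig ->
  is_RInt (fun y => f y + g y) a b (If + Ig).
Proof. intros H1 H2. exact (is_RInt_plus _ _ _ _ _ _ H1 H2). Qed.
Lemma isR_scal (f : R -> R) a b c (If : R) : is_RInt f a b If -> is_RInt (fun y => c * f y) a b (c * If).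
Proof. intros H1. exact (is_RInt_scal _ _ _ c _ H1). Qed.
Lemma isR_minus (f g : R -> R) a b (If Ig : R) : is_RInt f a b If -> is_RInt g a b Ig ->
  is_RInt (fun y => f y - g y) a b (If - Ig).
Proof. intros H1 H2. exact (is_RInt_minus _ _ _ _ _ _ H1 H2). Qed.
Lemma isR_const a b (c : R) : is_RInt (fun _ => c) a b ((b - a) * c).
Proof. exact (@is_RInt_const R_NormedModule a b c). Qed.
Lemma isR_ext (f g : R -> R) a b (l : R) : (forall x, f x = g x) -> is_RInt f a b l -> is_RInt g a b l.
Proof. intros H; apply is_RInt_ext; auto. Qed.

Lemma isR_frs (G : nat -> R -> R) (I : nat -> R) a b l :
  (forall k, In k l -> is_RInt (G k) a b (I k)) ->
  is_RInt (fun t => frs l (fun k => G k t)) a b (frs l I).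
Proof. intros H; induction l; unfold frs in *; simpl.
  - pose proof (isR_const a b 0) as Hc. replace ((b-a)*0) with 0 in Hc by ring. exact Hc.
  - apply isR_plus; auto. apply H; simpl; auto. apply IHl. intros; apply H; simpl; auto. Qed.

Lemma isR_sumR (G : nat -> R -> R) (I : nat -> R) a b m n :
  (forall k, (m <= k <= n)%nat -> is_RInt (G k) a b (I k)) ->
  is_RInt (fun t => sumR m n (fun k => G k t)) a b (sumR m n I).
Proof. intros H. apply isR_frs. intros k Hk; apply in_seq in Hk; apply H; lia. Qed.

Lemma cont_plus (f g : R -> R) x : continuous f x -> continuous g x -> continuous (fun t => f t + g t) x.
Proof. intros; apply (continuous_plus f g); auto. Qed.
Lemma cont_mult (f g : R -> R) x : continuous f x -> continuous g x -> continuous (fun t => f t * g t) x.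
Proof. intros; apply (continuous_mult f g); auto. Qed.
Lemma cont_minus (f g : R -> R) x : continuous f x -> continuous g x -> continuous (fun t => f t - g t) x.
Proof. intros; apply (continuous_minus f g); auto. Qed.
Lemma cont_const (c : R) x : continuous (fun _ : R => c) x.
Proof. apply continuous_const. Qed.
Lemma cont_abs (f : R -> R) x : continuous f x -> continuous (fun t => Rabs (f t)) x.
Proof. intros; apply continuous_Rabs_comp; auto. Qed.
Lemma cont_cos c x : continuous (fun t => cos (c * t)) x.
Proof. apply (@ex_derive_continuous R_AbsRing R_NormedModule). auto_derive; auto. Qed.
Lemma cont_sin c x : continuous (fun t => sin (c * t)) x.
Proof. apply (@ex_derive_continuous R_AbsRing R_NormedModule). auto_derive; auto. Qed.
Lemma cont_lin (f : R -> R) u v x : (forall y, continuous f y) -> continuous (fun t => f (u * t + v)) x.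
Proof. intros H. apply (continuous_comp (fun t => u * t + v) f). apply (@ex_derive_continuous R_AbsRing R_NormedModule); auto_derive; auto. apply H. Qed.

Lemma cont_frs (G : nat -> R -> R) l x : (forall k, continuous (G k) x) ->
  continuous (fun t => frs l (fun k => G k t)) x.
Proof. intros H; induction l; unfold frs in *; simpl.
  - apply cont_const.
  - apply cont_plus; auto. Qed.

Lemma cont_sumR (G : nat -> R -> R) m n x : (forall k, continuous (G k) x) ->
  continuous (fun t => sumR m n (fun k => G k t)) x.
Proof. apply cont_frs. Qed.

Lemma exR (g : R -> R) a b : (forall y, continuous g y) -> ex_RInt g a b.
Proof. intros; apply (@ex_RInt_continuous R_CompleteNormedModule); auto. Qed.


Lemma RInt_lin1 (g : R -> R) c a b : (forall y, continuous g y) ->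
  RInt (fun t => g (t + c)) a b = RInt g (a + c) (b + c).
Proof. intros Hc.
  transitivity (RInt (fun y => scal 1 (g (1 * y + c))) a b).
  - apply RInt_ext. intros. unfold scal; simpl; unfold mult; simpl. rewrite !Rmult_1_l. reflexivity.
  - replace (a + c) with (1 * a + c) by ring. replace (b + c) with (1 * b + c) by ring.
    apply (@RInt_comp_lin R_CompleteNormedModule). apply exR; auto.
Qed.
Lemma RInt_neg (g : R -> R) a b : (forall y, continuous g y) ->
  RInt (fun t => g (- t)) a b = RInt g (- b) (- a).
Proof. intros Hc.
  assert (Hex : ex_RInt (fun t => g (- t)) a b).
  { apply exR. intros y. apply (cont_lin g (-1) 0 y) in Hc.
    eapply continuous_ext; [|exact Hc]. intros; simpl; f_equal; ring. }
  pose proof (@RInt_comp_lin R_CompleteNormedModule g (-1) 0 a b) as H.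
  rewrite (RInt_ext _ (fun y => opp (g (- y)))) in H.
  2:{ intros. unfold scal, opp; simpl; unfold mult; simpl. f_equal. ring_simplify. f_equal. f_equal. ring. }
  rewrite (@RInt_opp R_CompleteNormedModule) in H by exact Hex.
  replace (-1 * a + 0) with (-a) in H by ring. replace (-1 * b + 0) with (-b) in H by ring.
  rewrite <- (opp_RInt_swap g) in H by (apply exR; auto).
  unfold opp in H; simpl in H. specialize (H (exR _ _ _ Hc)). lra.
Qed.

Lemma RInt_shift (g : R -> R) c : (forall y, continuous g y) -> (forall y, g (y + 2 * PI) = g y) ->
  RInt (fun t => g (c + t)) (-PI) PI = RInt g (-PI) PI.
Proof. intros Hc Hp.
  assert (E1 : RInt (fun t => g (c + t)) (-PI) PI = RInt g (-PI + c) (PI + c)).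
  { rewrite <- RInt_lin1 by auto. apply RInt_ext; intros. f_equal; ring. }
  assert (E2 : RInt g PI (PI + c) = RInt g (-PI) (-PI + c)).
  { transitivity (RInt (fun t => g (t + 2 * PI)) (-PI) (-PI + c)).
    - rewrite RInt_lin1 by auto. f_equal; ring.
    - apply RInt_ext; intros; apply Hp. }
  rewrite E1.
  rewrite <- (RInt_Chasles g (-PI + c) PI (PI + c)) by (apply exR; auto).
  rewrite <- (RInt_Chasles g (-PI + c) (-PI) PI) by (apply exR; auto).
  rewrite E2. rewrite <- (opp_RInt_swap g (-PI) (-PI + c)) by (apply exR; auto).
  unfold plus, opp; simpl. ring. Qed.

Lemma f_bounded (f : R -> R) : (forall x, continuous f x) -> (forall x, f (x + 2 * PI) = f x) ->
  exists M, forall y, Rabs (f y) <= M.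
Proof. intros Hc Hp.
  destruct (continuity_ab_maj (fun t => Rabs (f t)) 0 (2 * PI)) as [Mx [HM _]].
  - pose proof PI_RGT_0; lra.
  - intros c _. apply continuity_pt_filterlim. apply cont_abs. apply Hc.
  exists (Rabs (f Mx)).
  assert (Hpos : forall N : nat, forall y, 0 <= y <= 2 * PI * (INR N + 1) -> Rabs (f y) <= Rabs (f Mx)).
  { induction N; intros y Hy.
    - apply HM. simpl in Hy; lra.
    - destruct (Rle_dec y (2 * PI * (INR N + 1))).
      + apply IHN; lra.
      + replace y with ((y - 2 * PI) + 2 * PI) by ring. rewrite Hp. apply IHN.
        rewrite S_INR in Hy. pose proof PI_RGT_0. pose proof (pos_INR N). nra. }
  assert (Hneg : forall N : nat, forall y, - (2 * PI * (INR N + 1)) <= y <= 0 -> Rabs (f y) <= Rabs (f Mx)).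
  { induction N; intros y Hy.
    - rewrite <- Hp. apply HM. simpl in Hy; lra.
    - rewrite <- Hp. destruct (Rle_dec 0 (y + 2 * PI)).
      + apply HM. pose proof PI_RGT_0. split; [lra|]. lra.
      + apply IHN. rewrite S_INR in Hy. pose proof PI_RGT_0. pose proof (pos_INR N). nra. }
  intros y. destruct (INR_archimed (2 * PI) (Rabs y)) as [N HN].
  { pose proof PI_RGT_0; lra. }
  destruct (Rle_dec 0 y).
  - apply (Hpos N). rewrite Rabs_right in HN by lra. pose proof (pos_INR N). nra.
  - apply (Hneg N). rewrite Rabs_left in HN by lra. pose proof (pos_INR N). nra.
Qed.

Lemma mod_bound (f : R -> R) : (forall x, continuous f x) -> (forall x, f (x + 2 * PI) = f x) ->
  forall d h x, Rabs h <= d -> Rabs (f (x + h) - f x) <= modulus f d.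
Proof. intros Hc Hp d h x Hh. destruct (f_bounded f Hc Hp) as [M HM].
  set (E := fun y => exists h x, Rabs h <= d /\ y = Rabs (f (x + h) - f x)).
  assert (HE : E (Rabs (f (x + h) - f x))) by (exists h, x; auto).
  assert (Hub : is_ub_Rbar E (2 * M)).
  { intros y [h' [x' [_ ->]]]. simpl. eapply Rle_trans; [apply Rabs_triang|].
    rewrite Rabs_Ropp. pose proof (HM (x' + h')); pose proof (HM x'); lra. }
  pose proof (Lub_Rbar_correct E) as [H1 H2].
  unfold modulus. fold E.
  specialize (H1 _ HE). specialize (H2 _ Hub).
  destruct (Lub_Rbar E); simpl in *; auto; contradiction.
Qed.

Definition DirK (k : nat) (t : R) : R := /2 + sumR 1 k (fun j => cos (INR j * t)).
Definition Kn (a : nat -> nat -> R) (n : nat) (t : R) : R := sumR 0 n (fun k => a n k * DirK k t).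

Lemma D_cont k x : continuous (DirK k) x.
Proof. unfold DirK. apply cont_plus; [apply cont_const|]. apply (cont_sumR (fun j t => cos (INR j * t))).
  intros; apply cont_cos. Qed.

Lemma Kn_cont a n x : continuous (Kn a n) x.
Proof. unfold Kn. apply (cont_sumR (fun k t => a n k * DirK k t)). intros; apply cont_mult; [apply cont_const|apply D_cont]. Qed.

Lemma D_per k y : DirK k (y + 2 * PI) = DirK k y.
Proof. unfold DirK. f_equal. apply sumR_ext. intros j _.
  replace (INR j * (y + 2 * PI)) with (INR j * y + 2 * INR j * PI) by ring. apply cos_period. Qed.

Lemma D_even k t : DirK k (- t) = DirK k t.
Proof. unfold DirK. f_equal. apply sumR_ext. intros j _.
  replace (INR j * - t) with (- (INR j * t)) by ring. apply cos_neg. Qed.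

Lemma Kn_even a n t : Kn a n (- t) = Kn a n t.
Proof. unfold Kn. apply sumR_ext. intros; rewrite D_even; auto. Qed.

Lemma sin_jPI j : sin (INR j * PI) = 0.
Proof. apply sin_eq_0_1. exists (Z.of_nat j). rewrite INR_IZR_INZ. auto. Qed.

Lemma cos_int j : (1 <= j)%nat -> is_RInt (fun t => cos (INR j * t)) (-PI) PI 0.
Proof. intros Hj.
  assert (Hj' : INR j <> 0) by (apply not_0_INR; lia).
  set (F := fun t => sin (INR j * t) / INR j).
  assert (H : is_RInt (fun t => cos (INR j * t)) (-PI) PI (minus (F PI) (F (-PI)))).
  { apply (@is_RInt_derive R_CompleteNormedModule).
    + intros x _. unfold F. auto_derive; auto. field; auto.
    + intros; apply cont_cos. }
  replace 0 with (minus (F PI) (F (-PI))); auto.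
  unfold minus, plus, opp, F; simpl. replace (INR j * - PI) with (- (INR j * PI)) by ring.
  rewrite sin_neg, sin_jPI. field; auto.
Qed.

Lemma D_int k : is_RInt (DirK k) (-PI) PI PI.
Proof. unfold DirK.
  replace PI with ((PI - - PI) * /2 + sumR 1 k (fun _ => 0)) at 3.
  - apply isR_plus; [apply isR_const|].
    apply (isR_sumR (fun j t => cos (INR j * t)) (fun j => 0)).
    intros j Hj. apply cos_int. lia.
  - rewrite sumR_const. field.
Qed.

Lemma fa_int f j : (forall x, continuous f x) ->
  is_RInt (fun s => f s * cos (INR j * s)) (-PI) PI (PI * fourier_a f j).
Proof. intros Hc. unfold fourier_a. rewrite <- Rmult_assoc, Rinv_r, Rmult_1_l by (pose proof PI_RGT_0; lra).
  apply (@RInt_correct R_CompleteNormedModule). apply exR. intros; apply cont_mult; [apply Hc|apply cont_cos]. Qed.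
Lemma fb_int f j : (forall x, continuous f x) ->
  is_RInt (fun s => f s * sin (INR j * s)) (-PI) PI (PI * fourier_b f j).
Proof. intros Hc. unfold fourier_b. rewrite <- Rmult_assoc, Rinv_r, Rmult_1_l by (pose proof PI_RGT_0; lra).
  apply (@RInt_correct R_CompleteNormedModule). apply exR. intros; apply cont_mult; [apply Hc|apply cont_sin]. Qed.

Lemma four_int f k x : (forall x, continuous f x) ->
  is_RInt (fun s => f s * DirK k (s - x)) (-PI) PI (PI * S_partial f k x).
Proof. intros Hc.
  assert (H : is_RInt (fun s => /2 * (f s * cos (INR 0 * s)) + sumR 1 k (fun j =>
     cos (INR j * x) * (f s * cos (INR j * s)) + sin (INR j * x) * (f s * sin (INR j * s)))) (-PI) PI
     (/2 * (PI * fourier_a f 0) + sumR 1 k (fun j => cos (INR j * x) * (PI * fourier_a f j) + sin (INR j * x) * (PI * fourier_b f j)))).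
  { apply isR_plus. apply isR_scal. apply fa_int; auto.
    apply (isR_sumR (fun j s => cos (INR j * x) * (f s * cos (INR j * s)) + sin (INR j * x) * (f s * sin (INR j * s)))).
    intros j _. apply isR_plus; apply isR_scal; [apply fa_int|apply fb_int]; auto. }
  replace (PI * S_partial f k x) with (/2 * (PI * fourier_a f 0) + sumR 1 k (fun j => cos (INR j * x) * (PI * fourier_a f j) + sin (INR j * x) * (PI * fourier_b f j))).
  - eapply isR_ext; [|exact H]. intros s. simpl. unfold DirK.
    rewrite Rmult_0_l, cos_0, Rmult_plus_distr_l, <- sumR_scal. f_equal; [ring|].
    apply sumR_ext. intros j _. replace (INR j * (s - x)) with (INR j * s - INR j * x) by ring.
    rewrite cos_minus. ring.
  - unfold S_partial. rewrite Rmult_plus_distr_l, <- sumR_scal. f_equal; [field|].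
    apply sumR_ext; intros; ring.
Qed.

Lemma cont_shift (g : R -> R) c y : (forall z, continuous g z) -> continuous (fun t => g (t + c)) y.
Proof. intros H. pose proof (cont_lin g 1 c y H) as H1.
  eapply continuous_ext; [|exact H1]. intros t; simpl. f_equal. ring. Qed.

Lemma dir_int f k x : (forall x, continuous f x) -> (forall x, f (x + 2 * PI) = f x) ->
  is_RInt (fun t => (f (x + t) - f x) * DirK k t) (-PI) PI (PI * (S_partial f k x - f x)).
Proof. intros Hc Hp.
  set (g := fun s => f s * DirK k (s - x)).
  assert (Hgc : forall y, continuous g y).
  { intros y. unfold g. apply cont_mult; [apply Hc|]. 
    apply (cont_shift (DirK k) (-x) y). apply D_cont. }
  assert (Hgp : forall y, g (y + 2 * PI) = g y).
  { intros y; unfold g. rewrite Hp. replace (y + 2 * PI - x) with ((y - x) + 2 * PI) by ring.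
    rewrite D_per; auto. }
  assert (H1 : is_RInt (fun t => f (x + t) * DirK k t) (-PI) PI (PI * S_partial f k x)).
  { assert (E : RInt (fun t => f (x + t) * DirK k t) (-PI) PI = PI * S_partial f k x).
    { rewrite <- (is_RInt_unique _ _ _ _ (four_int f k x Hc)).
      change (RInt (fun s => f s * DirK k (s - x)) (-PI) PI) with (RInt g (-PI) PI).
      rewrite <- (RInt_shift g x Hgc Hgp). apply RInt_ext. intros; unfold g. f_equal. f_equal. ring. }
    rewrite <- E. apply (@RInt_correct R_CompleteNormedModule). apply exR.
    intros y. apply cont_mult; [|apply D_cont]. 
    eapply continuous_ext; [|apply (cont_shift f x y Hc)]. intros; simpl; f_equal; ring. }
  replace (PI * (S_partial f k x - f x)) with (PI * S_partial f k x - f x * PI) by ring.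
  eapply isR_ext; [|apply (isR_minus _ _ _ _ _ _ H1 (isR_scal _ _ _ (f x) _ (D_int k)))].
  intros t; simpl; ring.
Qed.

Lemma T_int f a n x : (forall x, continuous f x) -> (forall x, f (x + 2 * PI) = f x) ->
  sumR 0 n (a n) = 1 ->
  is_RInt (fun t => (f (x + t) - f x) * Kn a n t) (-PI) PI (PI * (T_nA a f n x - f x)).
Proof. intros Hc Hp Ha.
  assert (H := isR_sumR (fun k t => a n k * ((f (x + t) - f x) * DirK k t)) (fun k => a n k * (PI * (S_partial f k x - f x))) (-PI) PI 0 n
     (fun k _ => isR_scal _ _ _ _ _ (dir_int f k x Hc Hp))).
  replace (PI * (T_nA a f n x - f x)) with (sumR 0 n (fun k => a n k * (PI * (S_partial f k x - f x)))).
  - eapply isR_ext; [|exact H]. intros t; simpl. unfold Kn. rewrite <- sumR_scal.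
    apply sumR_ext; intros; ring.
  - rewrite (sumR_ext _ _ _ (fun k => PI * (a n k * S_partial f k x) - (PI * f x) * a n k)) by (intros; ring).
    rewrite sumR_minus, !sumR_scal. unfold T_nA. change (sumR 0 n (fun k => a n k)) with (sumR 0 n (a n)).
    rewrite Ha. ring.
Qed.

Lemma sin_lb3 y : 0 <= y <= 2 -> y / 3 <= sin y.
Proof. intros H. assert (HP := PI2_3_2).
  destruct (sin_bound y 0) as [H1 _]; try lra.
  simpl in H1. unfold sin_approx, sin_term in H1. simpl in H1. nra. Qed.

Lemma D_abs k t : Rabs (DirK k t) <= /2 + INR k.
Proof. unfold DirK. eapply Rle_trans; [apply Rabs_triang|]. rewrite Rabs_right by lra.
  apply Rplus_le_compat_l. eapply Rle_trans; [apply sumR_abs|].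
  eapply Rle_trans; [apply (sumR_le _ _ _ (fun _ => 1))|].
  - intros; apply Rabs_le; apply COS_bound.
  - rewrite sumR_const. replace (S k - 1)%nat with k by lia. lra. Qed.

Lemma Kn_abs1 a n t : (forall k, 0 <= a n k) -> sumR 0 n (a n) = 1 -> Rabs (Kn a n t) <= INR n + 1.
Proof. intros Hn Hs. unfold Kn. eapply Rle_trans; [apply sumR_abs|].
  eapply Rle_trans; [apply (sumR_le _ _ _ (fun k => (INR n + 1) * a n k))|].
  - intros k Hk. rewrite Rabs_mult, Rabs_right by (apply Rle_ge; auto).
    pose proof (D_abs k t). assert (INR k <= INR n) by (apply le_INR; lia).
    pose proof (Hn k). pose proof (Rabs_pos (DirK k t)). nra.
  - rewrite sumR_scal. change (sumR 0 n (fun k => a n k)) with (sumR 0 n (a n)). rewrite Hs. lra. Qed.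

Lemma two_sin_D k t : 2 * sin (t / 2) * DirK k t = sin ((INR k + /2) * t).
Proof. induction k.
  - unfold DirK. rewrite sumR_nil by lia. replace ((INR 0 + /2) * t) with (t/2) by (simpl; field). field.
  - unfold DirK in *. rewrite sumR_S by lia.
    replace (2 * sin (t / 2) * (/ 2 + (sumR 1 k (fun j => cos (INR j * t)) + cos (INR (S k) * t))))
      with (2 * sin (t / 2) * (/ 2 + sumR 1 k (fun j => cos (INR j * t))) + 2 * sin (t/2) * cos (INR (S k) * t)) by ring.
    rewrite IHk. rewrite S_INR.
    replace ((INR k + /2) * t) with ((INR k + 1) * t - t/2) by field.
    replace ((INR k + 1 + /2) * t) with ((INR k + 1) * t + t/2) by field.
    rewrite sin_plus, sin_minus. ring. Qed.

Lemma two_sin_s k t : 2 * sin (t / 2) * sin ((INR k + /2) * t) = cos (INR k * t) - cos (INR (S k) * t).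
Proof. rewrite S_INR.
  replace (INR k * t) with ((INR k + /2) * t - t/2) by field.
  replace ((INR k + 1) * t) with ((INR k + /2) * t + t/2) by field.
  rewrite cos_plus, cos_minus. ring. Qed.

Lemma wsum_aux (w c : nat -> R) m d : (forall k, 0 <= w k) -> (forall k, w k <= w (S k)) -> (forall k, Rabs (c k) <= 1) ->
  Rabs (sumR m (m + d) (fun k => w k * (c k - c (S k))) + w (m + d)%nat * c (S (m + d))) <= w (m + d)%nat.
Proof. intros Hw Hm Hc. induction d.
  - rewrite Nat.add_0_r, sumR_one.
    replace (w m * (c m - c (S m)) + w m * c (S m)) with (w m * c m) by ring.
    rewrite Rabs_mult, Rabs_right by (apply Rle_ge; auto). specialize (Hc m); specialize (Hw m). nra.
  - replace (m + S d)%nat with (S (m + d)) by lia. rewrite sumR_S by lia.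
    set (q := (m + d)%nat) in *. set (S0 := sumR m q (fun k => w k * (c k - c (S k)))) in *.
    replace (S0 + w (S q) * (c (S q) - c (S (S q))) + w (S q) * c (S (S q)))
      with ((S0 + w q * c (S q)) + (w (S q) - w q) * c (S q)) by ring.
    eapply Rle_trans; [apply Rabs_triang|]. rewrite Rabs_mult, (Rabs_right (w (S q) - w q)) by (specialize (Hm q); lra).
    specialize (Hc (S q)). specialize (Hm q). nra. Qed.

Lemma wsum_bound (w c : nat -> R) m q : (m <= q)%nat -> (forall k, 0 <= w k) -> (forall k, w k <= w (S k)) -> (forall k, Rabs (c k) <= 1) ->
  Rabs (sumR m q (fun k => w k * (c k - c (S k)))) <= 2 * w q.
Proof. intros Hq Hw Hm Hc. replace q with (m + (q - m))%nat by lia.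
  pose proof (wsum_aux w c m (q - m) Hw Hm Hc) as H.
  set (Q := (m + (q - m))%nat) in *. set (S0 := sumR m Q _) in *.
  replace S0 with ((S0 + w Q * c (S Q)) - w Q * c (S Q)) by ring.
  unfold Rminus at 1. eapply Rle_trans; [apply Rabs_triang|]. rewrite Rabs_Ropp, Rabs_mult, (Rabs_right (w Q)) by (apply Rle_ge; auto).
  specialize (Hc (S Q)). specialize (Hw Q). nra. Qed.

Lemma abel_aux (b c : nat -> R) m d :
  sumR m (m + d) (fun k => b k * c k) =
  sumR m (m + d) (fun k => (b k - b (S k)) * sumR m k c) + b (S (m + d)) * sumR m (m + d) c.
Proof. induction d.
  - rewrite Nat.add_0_r, !sumR_one. ring.
  - replace (m + S d)%nat with (S (m + d)) by lia. rewrite !(sumR_S m (m + d)) by lia.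
    rewrite IHd. ring. Qed.

Lemma abel (b c : nat -> R) m q : (m <= q)%nat ->
  sumR m q (fun k => b k * c k) =
  sumR m q (fun k => (b k - b (S k)) * sumR m k c) + b (S q) * sumR m q c.
Proof. intros H. replace q with (m + (q - m))%nat by lia. apply abel_aux. Qed.

Lemma sum_n_sumR (u : nat -> R) p : sum_n u p = sumR 0 p u.
Proof. induction p.
  - rewrite sum_O, sumR_one. auto.
  - rewrite sum_Sn, sumR_S by lia. rewrite IHp. reflexivity. Qed.

Lemma Series_finite (u : nat -> R) N : (forall i, (N < i)%nat -> u i = 0) -> Series u = sumR 0 N u.
Proof. intros H. apply is_series_unique.
  assert (E : forall p, (N <= p)%nat -> sumR 0 p u = sumR 0 N u).
  { intros p Hp. induction Hp; auto. rewrite sumR_S by lia. rewrite (H (S m)) by lia. rewrite IHHp. ring. }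
  change (is_lim_seq (sum_n u) (sumR 0 N u)).
  apply (is_lim_seq_ext_loc (fun _ => sumR 0 N u)); [|apply is_lim_seq_const].
  exists N. intros p Hp. rewrite sum_n_sumR. rewrite (E p Hp); auto. Qed.

Definition SerH (a : nat -> nat -> R) (beta : R) n m :=
  Series (fun i => Rpower (INR (m + i) + 1) beta *
        Rabs (a n (m + i)%nat / Rpower (INR (m + i) + 1) beta
              - a n (S (m + i)) / Rpower (INR (m + i) + 2) beta)).

Lemma tail_bound (a : nat -> nat -> R) n beta K t m :
  0 <= beta -> (forall k, (n < k)%nat -> a n k = 0) ->
  SerH a beta n m <= K * a n m ->
  0 < sin (t / 2) -> (m <= n)%nat ->
  Rabs (sumR m n (fun k => a n k * sin ((INR k + /2) * t))) <= K * a n m / sin (t / 2).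
Proof. intros Hb Hlow Hser Hs Hmn.
  set (sg := sin (t / 2)) in *.
  set (w := fun k : nat => Rpower (INR k + 1) beta).
  set (b := fun k => a n k / w k).
  assert (Hwp : forall k, 0 < w k) by (intros; unfold w, Rpower; apply exp_pos).
  assert (Hwm : forall k, w k <= w (S k)).
  { intros k; unfold w. apply Rle_Rpower_l; auto. rewrite S_INR. pose proof (pos_INR k). lra. }
  set (s := fun k : nat => sin ((INR k + /2) * t)).
  set (C := fun k => sumR m k (fun j => w j * s j)).
  assert (HC : forall k, (m <= k)%nat -> Rabs (C k) <= w k / sg).
  { intros k Hk. unfold C.
    rewrite (sumR_ext _ _ _ (fun j => / (2 * sg) * (w j * (cos (INR j * t) - cos (INR (S j) * t))))).
    - rewrite sumR_scal, Rabs_mult, Rabs_right by (apply Rle_ge; apply Rlt_le; apply Rinv_0_lt_compat; lra).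
      pose proof (wsum_bound w (fun j => cos (INR j * t)) m k Hk (fun k => Rlt_le _ _ (Hwp k)) Hwm (fun j => Rabs_le _ _ (COS_bound _))) as H.
      simpl in H. 
      apply Rle_trans with (/ (2 * sg) * (2 * w k)).
      + apply Rmult_le_compat_l; auto. apply Rlt_le; apply Rinv_0_lt_compat; lra.
      + apply Req_le. field. lra.
    - intros j _. unfold s. rewrite <- two_sin_s. fold sg. field. lra. }
  rewrite (sumR_ext _ _ _ (fun k => b k * (w k * s k))).
  2:{ intros k _. unfold b, s. field. apply Rgt_not_eq, Hwp. }
  rewrite abel by auto.
  assert (Hb0 : b (S n) = 0) by (unfold b; rewrite Hlow by lia; unfold Rdiv; ring).
  rewrite Hb0, Rmult_0_l, Rplus_0_r. fold C.
  eapply Rle_trans; [apply sumR_abs|].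
  eapply Rle_trans; [apply (sumR_le _ _ _ (fun k => / sg * (w k * Rabs (b k - b (S k)))))|].
  - intros k Hk. rewrite Rabs_mult. specialize (HC k ltac:(lia)).
    replace (/ sg * (w k * Rabs (b k - b (S k)))) with (Rabs (b k - b (S k)) * (w k / sg)) by (field; lra).
    apply Rmult_le_compat_l; auto. apply Rabs_pos.
  - rewrite sumR_scal.
    assert (E : SerH a beta n m = sumR m n (fun k => w k * Rabs (b k - b (S k)))).
    { unfold SerH. rewrite (Series_ext _ (fun i => w (m + i)%nat * Rabs (b (m + i)%nat - b (S (m + i))))).
      - rewrite (Series_finite _ (n - m)).
        + pose proof (sumR_shift m (n - m) (fun k => w k * Rabs (b k - b (S k)))) as HS. cbv beta in HS.
          rewrite HS. replace (m + (n - m))%nat with n by lia. reflexivity.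
        + intros i Hi. unfold b. rewrite !Hlow by lia. unfold Rdiv. rewrite !Rmult_0_l, Rminus_0_r, Rabs_R0. ring.
      - intros i. unfold b; unfold w. cbv beta. rewrite (S_INR (m + i)). replace (INR (m + i) + 1 + 1) with (INR (m + i) + 2) by ring. reflexivity. }
    rewrite <- E. unfold Rdiv. rewrite (Rmult_comm (K * a n m)). apply Rmult_le_compat_l; auto.
    apply Rlt_le; apply Rinv_0_lt_compat; lra.
Qed.

Lemma Kn_absv (a : nat -> nat -> R) n beta K t v :
  0 <= beta -> 0 < K -> (forall k, (n < k)%nat -> a n k = 0) -> (forall k, 0 <= a n k) ->
  (forall m, (m <= n)%nat -> SerH a beta n m <= K * a n m) ->
  (1 <= v <= n)%nat -> PI / (INR v + 1) < t -> t <= PI ->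
  Rabs (Kn a n t) <= (1 + 2 * K) * (INR v + 1) * sumR 0 v (a n).
Proof. intros Hb HK Hlow Hnn Hser Hv Ht1 Ht2.
  assert (HPI := PI2_3_2). assert (HPI4 := PI_4).
  assert (HV : 0 < INR v + 1) by (pose proof (pos_INR v); lra).
  assert (Htv : PI < t * (INR v + 1)).
  { apply (Rmult_lt_compat_r (INR v + 1)) in Ht1; auto. unfold Rdiv in Ht1.
    rewrite Rmult_assoc, Rinv_l, Rmult_1_r in Ht1 by lra. lra. }
  assert (Ht0 : 0 < t).
  { apply Rlt_trans with (PI / (INR v + 1)); auto. apply Rdiv_lt_0_compat; lra. }
  set (sg := sin (t / 2)).
  assert (Hsg : t / 2 / 3 <= sg) by (apply sin_lb3; lra).
  assert (Hsg0 : 0 < sg) by lra.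
  assert (HsgV : / 2 <= sg * (INR v + 1)) by nra.
  set (X := sumR 0 n (fun k => a n k * sin ((INR k + /2) * t))).
  assert (HX : 2 * sg * Kn a n t = X).
  { unfold Kn, X. rewrite <- sumR_scal. apply sumR_ext. intros k _. rewrite <- two_sin_D. fold sg. ring. }
  set (A := sumR 0 v (a n)).
  assert (HA : 0 <= A) by (apply sumR_nonneg; auto).
  assert (Hm : forall m, (m <= v)%nat -> Rabs X <= A + K / sg * a n m).
  { intros m Hmv. destruct m as [|p].
    - unfold X. pose proof (tail_bound a n beta K t 0 Hb Hlow (Hser 0%nat ltac:(lia)) Hsg0 ltac:(lia)) as T.
      fold sg in T. replace (K * a n 0%nat / sg) with (K / sg * a n 0%nat) in T by (field; lra). lra.
    - unfold X. rewrite (sumR_split 0 p n) by lia.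
      eapply Rle_trans; [apply Rabs_triang|]. apply Rplus_le_compat.
      + eapply Rle_trans; [apply sumR_abs|]. apply Rle_trans with (sumR 0 p (a n)).
        * apply sumR_le. intros k _. rewrite Rabs_mult, Rabs_right by (apply Rle_ge; auto).
          pose proof (SIN_bound ((INR k + /2) * t)). pose proof (Hnn k).
          assert (Rabs (sin ((INR k + / 2) * t)) <= 1) by (apply Rabs_le; lra). nra.
        * unfold A. apply sumR_mono; auto. lia.
      + pose proof (tail_bound a n beta K t (S p) Hb Hlow (Hser (S p) ltac:(lia)) Hsg0 ltac:(lia)) as T.
        fold sg in T. replace (K * a n (S p) / sg) with (K / sg * a n (S p)) in T by (field; lra). lra. }
  assert (Hsum : INR (S v) * Rabs X <= INR (S v) * A + K / sg * A).
  { pose proof (sumR_le 0 v (fun _ => Rabs X) (fun m => A + K / sg * a n m) (fun m Hm' => Hm m (proj2 Hm'))) as H.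
    rewrite sumR_const, sumR_plus, sumR_const, sumR_scal in H. replace (S v - 0)%nat with (S v) in H by lia. exact H. }
  rewrite S_INR in Hsum.
  assert (HKs : K / sg * A <= 2 * K * (INR v + 1) * A).
  { assert (/ sg <= 2 * (INR v + 1)).
    { apply Rmult_le_reg_l with sg; auto. rewrite Rinv_r by lra. nra. }
    unfold Rdiv. rewrite (Rmult_comm K). replace (2 * K * (INR v + 1) * A) with ((2 * (INR v + 1)) * K * A) by ring.
    apply Rmult_le_compat_r; auto. apply Rmult_le_compat_r; lra. }
  assert (HXb : Rabs X <= (1 + 2 * K) * A).
  { apply Rmult_le_reg_l with (INR v + 1); auto. nra. }
  assert (HKX : Rabs (Kn a n t) = Rabs X / (2 * sg)).
  { rewrite <- HX. rewrite Rabs_mult, (Rabs_right (2 * sg)) by lra. field. lra. }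
  rewrite HKX. apply Rle_trans with (Rabs X * (INR v + 1)).
  - unfold Rdiv. apply Rmult_le_compat_l; [apply Rabs_pos|].
    apply Rmult_le_reg_l with (2 * sg); [lra|]. rewrite Rinv_r by lra. nra.
  - pose proof (Rabs_pos X). nra.
Qed.

Lemma RInt_le_const (G : R -> R) a b c : a <= b -> (forall y, continuous G y) ->
  (forall t, a < t < b -> G t <= c) -> RInt G a b <= (b - a) * c.
Proof. intros Hab Hc H.
  replace ((b - a) * c) with (RInt (fun _ => c) a b).
  - apply RInt_le; auto. apply exR; auto. apply exR; intros; apply cont_const.
  - rewrite RInt_const. reflexivity. Qed.

Lemma RInt_decomp (G : R -> R) N : (forall y, continuous G y) ->
  RInt G 0 PI = RInt G 0 (PI / (INR N + 1)) + sumR 1 N (fun v => RInt G (PI / (INR v + 1)) (PI / INR v)).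
Proof. intros Hc. induction N.
  - rewrite sumR_nil by lia. replace (PI / (INR 0 + 1)) with PI by (simpl; field). symmetry; apply Rplus_0_r.
  - rewrite sumR_S by lia. rewrite IHN.
    replace (PI / INR (S N)) with (PI / (INR N + 1)) by (rewrite S_INR; auto).
    rewrite <- (RInt_Chasles G 0 (PI / (INR (S N) + 1)) (PI / (INR N + 1))) by (apply exR; auto).
    unfold plus; simpl.
    set (x1 := RInt G 0 (PI / (INR (S N) + 1))). set (x2 := RInt G (PI / (INR (S N) + 1)) (PI / (INR N + 1))).
    set (x3 := sumR 1 N _). change (x1 + x2 + x3 = x1 + (x3 + x2)). ring. Qed.

Lemma half_bound (f : R -> R) (a : nat -> nat -> R) n beta K (phi : R -> R) :
  0 <= beta -> 0 < K -> (forall k, (n < k)%nat -> a n k = 0) -> (forall k, 0 <= a n k) ->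
  sumR 0 n (a n) = 1 ->
  (forall m, (m <= n)%nat -> SerH a beta n m <= K * a n m) ->
  (forall y, continuous phi y) ->
  (forall t d, 0 <= t <= d -> Rabs (phi t) <= modulus f d) ->
  RInt (fun t => Rabs (phi t * Kn a n t)) 0 PI <=
  PI * modulus f (PI / (INR n + 1)) +
  PI * (1 + 2 * K) * sumR 1 n (fun v => / INR v * modulus f (PI / INR v) * sumR 0 v (a n)).
Proof. intros Hb HK Hlow Hnn Hs Hser Hpc Hphi.
  assert (HPI := PI_RGT_0).
  set (G := fun t => Rabs (phi t * Kn a n t)).
  assert (HG : forall y, continuous G y).
  { intros y; unfold G. apply cont_abs. apply cont_mult; auto. apply Kn_cont. }
  rewrite (RInt_decomp G n HG).
  assert (Hn1 : 0 < INR n + 1) by (pose proof (pos_INR n); lra).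
  apply Rplus_le_compat.
  - eapply Rle_trans; [apply (RInt_le_const G _ _ (modulus f (PI / (INR n + 1)) * (INR n + 1)))|].
    + apply Rlt_le, Rdiv_lt_0_compat; lra.
    + auto.
    + intros t Ht. unfold G. rewrite Rabs_mult. apply Rmult_le_compat; try apply Rabs_pos.
      * apply Hphi; lra.
      * apply Kn_abs1; auto.
    + right. field. lra.
  - rewrite <- sumR_scal. apply sumR_le. intros v Hv.
    assert (Hv0 : 0 < INR v) by (apply lt_0_INR; lia).
    assert (Hv1 : INR v <= INR n) by (apply le_INR; lia).
    assert (Hord : PI / (INR v + 1) <= PI / INR v).
    { apply Rmult_le_compat_l; [lra|]. apply Rinv_le_contravar; lra. }
    assert (HvP : PI / INR v <= PI).
    { unfold Rdiv. rewrite <- (Rmult_1_r PI) at 2. apply Rmult_le_compat_l; [lra|].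
      assert (1 <= INR v) by (replace 1 with (INR 1) by reflexivity; apply le_INR; lia).
      rewrite <- Rinv_1. apply Rinv_le_contravar; lra. }
    eapply Rle_trans; [apply (RInt_le_const G _ _ (modulus f (PI / INR v) * ((1 + 2 * K) * (INR v + 1) * sumR 0 v (a n))))|].
    + auto.
    + auto.
    + intros t Ht. unfold G. rewrite Rabs_mult. apply Rmult_le_compat; try apply Rabs_pos.
      * apply Hphi. split; [|lra]. apply Rlt_le, Rle_lt_trans with (PI / (INR v + 1)); [|lra].
        apply Rlt_le, Rdiv_lt_0_compat; lra.
      * apply (Kn_absv a n beta K t v); auto; try lia; try lra.
    + right. field. lra.
Qed.

Theorem theorem3p3 (f : R -> R) (a : nat -> nat -> R) (beta : R)
  (f_cont : forall x, continuous f x)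
  (f_per : forall x, f (x + 2 * PI) = f x)
  (a_lower : forall n k, (n < k)%nat -> a n k = 0)
  (a_nonneg : forall n k, 0 <= a n k)
  (a_sum : forall n, sumR 0 n (a n) = 1)
  (beta_nonneg : 0 <= beta)
  (hyp : exists K, 0 < K /\ forall n m, (m <= n)%nat ->
     Series (fun i => Rpower (INR (m + i) + 1) beta *
        Rabs (a n (m + i)%nat / Rpower (INR (m + i) + 1) beta
              - a n (S (m + i)) / Rpower (INR (m + i) + 2) beta))
     <= K * a n m) :
  exists C, 0 < C /\ forall (n : nat) (x : R),
    Rabs (T_nA a f n x - f x) <=
    C * (modulus f (PI / (INR n + 1)) +
         sumR 1 n (fun v => / INR v * modulus f (PI / INR v) * sumR 0 v (a n))).
Proof.
  destruct hyp as [K [HK Hser]].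
  exists (2 * (1 + 2 * K)). split; [lra|].
  intros n x.
  assert (HPI := PI_RGT_0).
  set (Hf := fun t => (f (x + t) - f x) * Kn a n t).
  assert (Hfc : forall y, continuous Hf y).
  { intros y. unfold Hf. apply cont_mult; [|apply Kn_cont]. apply cont_minus; [|apply cont_const].
    eapply continuous_ext; [|apply (cont_shift f x y f_cont)]. intros; simpl; f_equal; ring. }
  pose proof (is_RInt_unique _ _ _ _ (T_int f a n x f_cont f_per (a_sum n))) as E.
  fold Hf in E.
  assert (Habs : Rabs (RInt Hf (-PI) PI) <= RInt (fun t => Rabs (Hf t)) (-PI) 0 + RInt (fun t => Rabs (Hf t)) 0 PI).
  { eapply Rle_trans; [apply abs_RInt_le; [lra|apply exR; auto]|].
    rewrite <- (RInt_Chasles (fun t => Rabs (Hf t)) (-PI) 0 PI) by (apply exR; intros; apply cont_abs; auto).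
    right; reflexivity. }
  assert (Hneg : RInt (fun t => Rabs (Hf t)) (-PI) 0 = RInt (fun t => Rabs ((f (x + - t) - f x) * Kn a n t)) 0 PI).
  { rewrite <- Ropp_0 at 1. rewrite <- (RInt_neg (fun t => Rabs (Hf t))) by (intros; apply cont_abs; auto).
    apply RInt_ext. intros; unfold Hf. rewrite Kn_even. reflexivity. }
  assert (Hser' : forall m, (m <= n)%nat -> SerH a beta n m <= K * a n m) by (intros; apply Hser; auto).
  pose proof (mod_bound f f_cont f_per) as MB.
  assert (B1 := half_bound f a n beta K (fun t => f (x + t) - f x) beta_nonneg HK (a_lower n) (a_nonneg n) (a_sum n) Hser').
  assert (B2 := half_bound f a n beta K (fun t => f (x + - t) - f x) beta_nonneg HK (a_lower n) (a_nonneg n) (a_sum n) Hser').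
  cbv beta in B1, B2.
  assert (P1 : RInt (fun t => Rabs ((f (x + t) - f x) * Kn a n t)) 0 PI <= PI * modulus f (PI / (INR n + 1)) +
     PI * (1 + 2 * K) * sumR 1 n (fun v => / INR v * modulus f (PI / INR v) * sumR 0 v (a n))).
  { apply B1.
    - intros y. apply cont_minus; [|apply cont_const].
      eapply continuous_ext; [|apply (cont_shift f x y f_cont)]. intros; simpl; f_equal; ring.
    - intros t d Ht. apply MB. rewrite Rabs_right; lra. }
  assert (P2 : RInt (fun t => Rabs ((f (x + - t) - f x) * Kn a n t)) 0 PI <= PI * modulus f (PI / (INR n + 1)) +
     PI * (1 + 2 * K) * sumR 1 n (fun v => / INR v * modulus f (PI / INR v) * sumR 0 v (a n))).
  { apply B2.
    - intros y. apply cont_minus; [|apply cont_const].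
      eapply continuous_ext; [|apply (cont_lin f (-1) x y f_cont)]. intros; simpl; f_equal; ring.
    - intros t d Ht. apply MB. rewrite Rabs_Ropp, Rabs_right; lra. }
  assert (W0 : 0 <= modulus f (PI / (INR n + 1))).
  { eapply Rle_trans; [apply Rabs_pos|]. apply (MB _ 0 x). rewrite Rabs_R0. apply Rlt_le, Rdiv_lt_0_compat; [lra|].
    pose proof (pos_INR n); lra. }
  rewrite Hneg in Habs. rewrite E in Habs. unfold Hf in Habs.
  rewrite Rabs_mult, Rabs_right in Habs by lra.
  set (w1 := modulus f (PI / (INR n + 1))) in *.
  set (S1 := sumR 1 n _) in *.
  assert (Rabs (T_nA a f n x - f x) <= 2 * w1 + 2 * (1 + 2 * K) * S1).
  { apply Rmult_le_reg_l with PI; auto. lra. }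
  nra.
Qed.
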